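(* Let $p,q,r$ be pairwise distinct primes with $p<q$ and $p<r$. Then for every integer $n$, $$|a_{pqr}(n)-a_{pqr}(n-1)|\le 1.$$
   Context: $\Phi_{pqr}(x)=\prod_{0<k<pqr,\ \gcd(k,pqr)=1}(x-\zeta^k)$, where $\zeta$ is a primitive $pqr$-th root of unity, is the ternary cyclotomic polynomial; $a_{pqr}(n)$ denotes its coefficient of $x^n$ (zero for $n$ outside $[0,\deg\Phi_{pqr}]$). *)

(* Defs.v *)
From HB Require Import structures.
From mathcomp Require Import all_boot all_order all_algebra all_field.
Set Implicit Arguments. Unset Strict Implicit. Unset Printing Implicit Defensive.
Import Order.TTheory GRing.Theory Num.Theory.
Local Open Scope ring_scope.

(* a_{pqr}(n): coefficient of x^n in the (integral) cyclotomic polynomial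
   'Phi_(p*q*r) (mathcomp's Cyclotomic), for an integer n; zero for n < 0,
   and zero for n > deg automatically (nth default 0). *)
Definition a_pqr (p q r : nat) (n : int) : int :=
  if (n < 0)%R then 0 else ('Phi_(p * q * r))`_(`|n|%N).

(* Main.v *)
Require Import Defs.
From Stdlib Require Import ZArith Lia Znumtheory.
From HB Require Import structures.
From mathcomp Require Import all_boot all_order all_algebra all_field.
Import Order.TTheory GRing.Theory Num.Theory.
Module ZCore.
Local Open Scope Z_scope.

Definition digits (p q r m a b c t : Z) :=
  0 <= a < p /\ 0 <= b < q /\ 0 <= c < r /\ m = a * q * r + b * p * r + c * p * q - t * (p * q * r).

Lemma divide_small (x d : Z) : 0 < x -> (x | d) -> - x < d < x -> d = 0.
Proof. intros Hx [k Hk] Hd. subst d.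
destruct (Z.lt_trichotomy k 0) as [H|[H|H]].
- assert (k * x <= -1 * x) by (apply Z.mul_le_mono_nonneg_r; lia). lia.
- subst; lia.
- assert (1 * x <= k * x) by (apply Z.mul_le_mono_nonneg_r; lia). lia.
Qed.

Lemma digit_one (p q r m : Z) : 2 <= p -> rel_prime (q * r) p ->
  exists a, 0 <= a < p /\ (p | m - a * q * r).
Proof.
intros Hp Hc. destruct (rel_prime_bezout _ _ Hc) as [u v Huv].
exists ((m * u) mod p). split. apply Z.mod_pos_bound; lia.
rewrite (Z.mod_eq (m * u) p); [|lia].
exists (m * v + (m * u/p) * q * r).
replace (m - (m * u - p * (m * u / p)) * q * r) with (m * (1 - u * (q * r)) + p * (m * u/p) * q * r) by ring.
rewrite -Huv. ring.
Qed.

Lemma digits_exist (p q r m : Z) : 2 <= p -> 2 <= q -> 2 <= r ->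
  rel_prime p q -> rel_prime p r -> rel_prime q r ->
  exists a b c t, digits p q r m a b c t.
Proof.
intros Hp Hq Hr Cpq Cpr Cqr.
assert (C1 : rel_prime (q * r) p).
{ apply rel_prime_sym, rel_prime_mult; auto. }
assert (C2 : rel_prime (r * p) q).
{ apply rel_prime_sym, rel_prime_mult; auto using rel_prime_sym. }
assert (C3 : rel_prime (p * q) r).
{ apply rel_prime_sym, rel_prime_mult; auto using rel_prime_sym. }
destruct (digit_one p q r m Hp C1) as [a [Ha Da]].
destruct (digit_one q r p m Hq C2) as [b [Hb Db]].
destruct (digit_one r p q m Hr C3) as [c [Hc Dc]].
set (D := m - a * q * r - b * p * r - c * p * q).
assert (DP : (p | D)).
{ destruct Da as [k Hk]. exists (k - b * r - c * q). unfold D. nia. }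
assert (DQ : (q | D)).
{ destruct Db as [k Hk]. exists (k - a * r - c * p). unfold D. nia. }
assert (DR : (r | D)).
{ destruct Dc as [k Hk]. exists (k - a * q - b * p). unfold D. nia. }
destruct DP as [x Hx].
assert (Hqx : (q | x)).
{ apply Gauss with p. rewrite Z.mul_comm -Hx. exact DQ. apply rel_prime_sym; exact Cpq. }
destruct Hqx as [y Hy].
assert (Hry : (r | y)).
{ apply Gauss with (p * q). replace (p * q * y) with D by (rewrite Hx Hy; ring). exact DR.
  apply rel_prime_mult; apply rel_prime_sym; auto. }
destruct Hry as [z Hz].
exists a, b, c, (-z). unfold digits. split; [lia|split; [lia|split; [lia|]]].
assert (D = z * (p * q * r)) by (rewrite Hx Hy Hz; ring).
unfold D in H. lia.
Qed.

Lemma digits_unique (p q r m a b c t a' b' c' t' : Z) : 2 <= p -> 2 <= q -> 2 <= r ->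
  rel_prime p q -> rel_prime p r -> rel_prime q r ->
  digits p q r m a b c t -> digits p q r m a' b' c' t' ->
  a = a' /\ b = b' /\ c = c' /\ t = t'.
Proof.
intros Hp Hq Hr Cpq Cpr Cqr [Ha [Hb [Hc Hm]]] [Ha' [Hb' [Hc' Hm']]].
assert (Ea : a = a').
{ assert (a - a' = 0); [|lia].
  apply (divide_small p); [lia| |lia].
  apply Gauss with (q * r); [| apply rel_prime_mult; auto].
  exists (-(b-b') * r - (c-c') * q + (t-t') * q * r). nia. }
assert (Eb : b = b').
{ assert (b - b' = 0); [|lia].
  apply (divide_small q); [lia| |lia].
  apply Gauss with (p * r); [| apply rel_prime_mult; auto using rel_prime_sym].
  exists (-(a-a') * r - (c-c') * p + (t-t') * p * r). nia. }
assert (Ec : c = c').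
{ assert (c - c' = 0); [|lia].
  apply (divide_small r); [lia| |lia].
  apply Gauss with (p * q); [| apply rel_prime_mult; auto using rel_prime_sym].
  exists (-(a-a') * q - (b-b') * p + (t-t') * p * q). nia. }
subst. split; auto. split; auto. split; auto.
assert (E : (t - t') * (p * q * r) = 0) by lia.
apply Z.mul_eq_0 in E. destruct E as [E|E]; [lia|].
assert (0 < p * q * r) by (apply Z.mul_pos_pos; [apply Z.mul_pos_pos|]; lia). lia.
Qed.

Lemma digits_swap12 p q r m a b c t : digits p q r m a b c t -> digits q p r m b a c t.
Proof. intros [Ha [Hb [Hc Hm]]]. repeat split; try lia; rewrite Hm; ring. Qed.

Lemma digits_swap13 p q r m a b c t : digits p q r m a b c t -> digits r q p m c b a t.
Proof. intros [Ha [Hb [Hc Hm]]]. repeat split; try lia; rewrite Hm; ring. Qed.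

Lemma digits_const (p q r a b c t : Z) : 2 <= p -> 2 <= q -> 2 <= r ->
  rel_prime p q -> rel_prime p r -> digits p q r p a b c t -> a = 0 /\ t = 1.
Proof.
intros Hp Hq Hr Cpq Cpr [Ha [Hb [Hc Hm]]].
assert (Ea : a = 0).
{ apply (divide_small p); [lia| |lia].
  apply Gauss with (q * r); [| apply rel_prime_mult; auto].
  exists (1 - b * r - c * q + t * q * r). nia. }
subst a. split; auto.
assert (E1 : 1 = b * r + c * q - t * (q * r)).
{ apply (Z.mul_reg_l _ _ p); [lia|]. nia. }
assert (B1 : b * r <= (q - 1) * r) by (apply Z.mul_le_mono_nonneg_r; lia).
assert (B2 : c * q <= (r - 1) * q) by (apply Z.mul_le_mono_nonneg_r; lia).
assert (B3 : 4 <= q * r) by nia.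
destruct (Z.lt_trichotomy t 1) as [H|[H|H]]; [|exact H|].
- destruct (Z.lt_trichotomy t 0) as [H'|[H'|H']]; [|subst t|lia].
  + assert (t * (q * r) <= -1 * (q * r)) by (apply Z.mul_le_mono_nonneg_r; lia).
    assert (0 <= b * r) by nia. assert (0 <= c * q) by nia. lia.
  + destruct (Z.eq_dec b 0) as [Hb0|Hb0].
    * subst b. destruct (Z.eq_dec c 0); [subst; lia|]. nia.
    * nia.
- assert (2 * (q * r) <= t * (q * r)) by (apply Z.mul_le_mono_nonneg_r; lia). lia.
Qed.

Definition ind (b : bool) : Z := if b then 1 else 0.

Definition Imp (A B : Prop) := A -> B.

Lemma shift (p q r m a b c t s x y z : Z) :
  digits p q r m a b c t -> digits p q r s x y z 1 ->
  exists a' b' c' wa wb wc, digits p q r (m - s) a' b' c' (t - 1 + wa + wb + wc) /\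
   Imp (a < x) (wa = 1 /\ a' = a - x + p) /\ Imp (x <= a) (wa = 0 /\ a' = a - x) /\
   Imp (b < y) (wb = 1 /\ b' = b - y + q) /\ Imp (y <= b) (wb = 0 /\ b' = b - y) /\
   Imp (c < z) (wc = 1 /\ c' = c - z + r) /\ Imp (z <= c) (wc = 0 /\ c' = c - z).
Proof.
intros [Ha [Hb [Hc Hm]]] [Hx [Hy [Hz Hs]]].
exists (a - x + p * ind (a <? x)), (b - y + q * ind (b <? y)), (c - z + r * ind (c <? z)),
  (ind (a <? x)), (ind (b <? y)), (ind (c <? z)).
unfold ind; destruct (Z.ltb_spec a x); destruct (Z.ltb_spec b y); destruct (Z.ltb_spec c z);
(split; [repeat split; try lia; rewrite Hm Hs; ring | unfold Imp; repeat split; lia]).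
Qed.

Definition E (p q r m : Z) := exists a b c,
  0 <= a < p /\ 0 <= b < q /\ 0 <= c < r /\ m = a * q * r + b * p * r + c * p * q.

Lemma E_iff (p q r m a b c t : Z) : 2 <= p -> 2 <= q -> 2 <= r ->
  rel_prime p q -> rel_prime p r -> rel_prime q r ->
  digits p q r m a b c t -> (E p q r m <-> t = 0).
Proof.
intros Hp Hq Hr Cpq Cpr Cqr D. split.
- intros [a' [b' [c' [Ha [Hb [Hc Hm]]]]]].
  assert (D' : digits p q r m a' b' c' 0) by (repeat split; try lia).
  destruct (digits_unique _ _ _ _ _ _ _ _ _ _ _ _ Hp Hq Hr Cpq Cpr Cqr D D') as [_ [_ [_ H]]]. exact H.
- intros ->. destruct D as [Ha [Hb [Hc Hm]]]. exists a, b, c. repeat split; lia.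
Qed.

Lemma t_nonneg (p q r m a b c t : Z) : 2 <= p -> 2 <= q -> 2 <= r ->
  digits p q r m a b c t -> m < p * q * r -> 0 <= t.
Proof.
intros Hp Hq Hr [Ha [Hb [Hc Hm]]] Hl.
assert (0 <= a * q * r) by (apply Z.mul_nonneg_nonneg; [apply Z.mul_nonneg_nonneg|]; lia).
assert (0 <= b * p * r) by (apply Z.mul_nonneg_nonneg; [apply Z.mul_nonneg_nonneg|]; lia).
assert (0 <= c * p * q) by (apply Z.mul_nonneg_nonneg; [apply Z.mul_nonneg_nonneg|]; lia).
destruct (Z_lt_le_dec t 0) as [Ht|Ht]; [|exact Ht].
assert (t * (p * q * r) <= -1 * (p * q * r)) by (apply Z.mul_le_mono_nonneg_r; [nia|lia]). lia.
Qed.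

Lemma t_le2 (p q r m a b c t : Z) : 2 <= p -> 2 <= q -> 2 <= r ->
  digits p q r m a b c t -> 0 <= m -> t <= 2.
Proof.
intros Hp Hq Hr [Ha [Hb [Hc Hm]]] Hl.
assert (a * q * r <= (p - 1) * q * r) by (apply Z.mul_le_mono_nonneg_r; [lia|]; apply Z.mul_le_mono_nonneg_r; lia).
assert (b * p * r <= (q - 1) * p * r) by (apply Z.mul_le_mono_nonneg_r; [lia|]; apply Z.mul_le_mono_nonneg_r; lia).
assert (c * p * q <= (r - 1) * p * q) by (apply Z.mul_le_mono_nonneg_r; [lia|]; apply Z.mul_le_mono_nonneg_r; lia).
destruct (Z_lt_le_dec 2 t) as [Ht|Ht]; [|exact Ht].
assert (3 * (p * q * r) <= t * (p * q * r)) by (apply Z.mul_le_mono_nonneg_r; [nia|lia]). nia.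
Qed.


Lemma abstract8 (t tp tq tr tpq tpr tqr tpqr F1 F2 F3 F4 F5 F6 F7 F8 F9 : Z) :
  0 <= t <= 2 ->
  0 <= F1 <= 1 -> 0 <= F2 <= 1 -> 0 <= F3 <= 1 -> 0 <= F4 <= 1 -> 0 <= F5 <= 1 ->
  0 <= F6 <= 1 -> 0 <= F7 <= 1 -> 0 <= F8 <= 1 -> 0 <= F9 <= 1 ->
  (F2 = 0 -> F4 <= F7) -> (F2 = 1 -> F7 <= F4) ->
  tp = t - 1 + F1 + F2 -> tq = t - 1 + F3 + F4 -> tr = t - 1 + F5 + F6 ->
  tpq = tp - 1 + F3 + F7 -> tpr = tp - 1 + F5 + F8 -> tqr = tq - 1 + F9 + F6 ->
  tpqr = tpq - 1 + F9 + F8 ->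
  0 <= tp -> 0 <= tq -> 0 <= tr -> 0 <= tpq -> 0 <= tpr -> 0 <= tqr -> 0 <= tpqr ->
  Z.abs (ind (t =? 0) - ind (tp =? 0) - ind (tq =? 0) - ind (tr =? 0)
         + ind (tpq =? 0) + ind (tpr =? 0) + ind (tqr =? 0) - ind (tpqr =? 0)) <= 1.
Proof.
intros. unfold ind.
destruct (Z.eqb_spec t 0); destruct (Z.eqb_spec tp 0); destruct (Z.eqb_spec tq 0);
destruct (Z.eqb_spec tr 0); destruct (Z.eqb_spec tpq 0); destruct (Z.eqb_spec tpr 0);
destruct (Z.eqb_spec tqr 0); destruct (Z.eqb_spec tpqr 0); lia.
Qed.

Lemma Bval (p q r m a b c t : Z) (B : Z -> bool) : 2 <= p -> 2 <= q -> 2 <= r ->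
  rel_prime p q -> rel_prime p r -> rel_prime q r ->
  (forall m, B m = true <-> E p q r m) ->
  digits p q r m a b c t -> B m = (t =? 0).
Proof.
intros Hp Hq Hr Cpq Cpr Cqr HB D.
pose proof (E_iff _ _ _ _ _ _ _ _ Hp Hq Hr Cpq Cpr Cqr D) as HE.
specialize (HB m).
destruct (B m) eqn:Bm; destruct (Z.eqb_spec t 0); auto.
- exfalso. apply n. apply HE, HB. reflexivity.
- exfalso. assert (false = true) by (apply HB, HE; auto). discriminate.
Qed.

Lemma core (p q r n : Z) (B : Z -> bool) : 2 <= p -> 2 <= q -> 2 <= r ->
  rel_prime p q -> rel_prime p r -> rel_prime q r ->
  (forall m, B m = true <-> E p q r m) -> 0 <= n < p * q * r ->
  Z.abs (ind (B n) - ind (B (n - p)) - ind (B (n - q)) - ind (B (n - r))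
         + ind (B (n - p - q)) + ind (B (n - p - r)) + ind (B (n - q - r))
         - ind (B (n - p - q - r))) <= 1.
Proof.
intros Hp Hq Hr Cpq Cpr Cqr HB Hn.
destruct (digits_exist p q r n Hp Hq Hr Cpq Cpr Cqr) as [a [b [c [t D0]]]].
destruct (digits_exist p q r p Hp Hq Hr Cpq Cpr Cqr) as [xp [yp [zp [tp Dp]]]].
destruct (digits_const _ _ _ _ _ _ _ Hp Hq Hr Cpq Cpr Dp) as [Exp Etp]. subst xp tp.
destruct (digits_exist p q r q Hp Hq Hr Cpq Cpr Cqr) as [xq [yq [zq [tq Dq]]]].
destruct (digits_const _ _ _ _ _ _ _ Hq Hp Hr (rel_prime_sym _ _ Cpq) Cqr (digits_swap12 _ _ _ _ _ _ _ _ Dq)) as [Eyq Etq]. subst yq tq.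
destruct (digits_exist p q r r Hp Hq Hr Cpq Cpr Cqr) as [xr [yr [zr [tr Dr]]]].
destruct (digits_const _ _ _ _ _ _ _ Hr Hq Hp (rel_prime_sym _ _ Cqr) (rel_prime_sym _ _ Cpr) (digits_swap13 _ _ _ _ _ _ _ _ Dr)) as [Ezr Etr]. subst zr tr.
destruct (shift _ _ _ _ _ _ _ _ _ _ _ _ D0 Dp) as [a1 [b1 [c1 [wa1 [wb1 [wc1 [D1 S1]]]]]]].
destruct (shift _ _ _ _ _ _ _ _ _ _ _ _ D0 Dq) as [a2 [b2 [c2 [wa2 [wb2 [wc2 [D2 S2]]]]]]].
destruct (shift _ _ _ _ _ _ _ _ _ _ _ _ D0 Dr) as [a3 [b3 [c3 [wa3 [wb3 [wc3 [D3 S3]]]]]]].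
destruct (shift _ _ _ _ _ _ _ _ _ _ _ _ D1 Dq) as [a4 [b4 [c4 [wa4 [wb4 [wc4 [D4 S4]]]]]]].
destruct (shift _ _ _ _ _ _ _ _ _ _ _ _ D1 Dr) as [a5 [b5 [c5 [wa5 [wb5 [wc5 [D5 S5]]]]]]].
destruct (shift _ _ _ _ _ _ _ _ _ _ _ _ D2 Dr) as [a6 [b6 [c6 [wa6 [wb6 [wc6 [D6 S6]]]]]]].
destruct (shift _ _ _ _ _ _ _ _ _ _ _ _ D4 Dr) as [a7 [b7 [c7 [wa7 [wb7 [wc7 [D7 S7]]]]]]].
rewrite (Bval _ _ _ _ _ _ _ _ B Hp Hq Hr Cpq Cpr Cqr HB D0).
rewrite (Bval _ _ _ _ _ _ _ _ B Hp Hq Hr Cpq Cpr Cqr HB D1).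
rewrite (Bval _ _ _ _ _ _ _ _ B Hp Hq Hr Cpq Cpr Cqr HB D2).
rewrite (Bval _ _ _ _ _ _ _ _ B Hp Hq Hr Cpq Cpr Cqr HB D3).
rewrite (Bval _ _ _ _ _ _ _ _ B Hp Hq Hr Cpq Cpr Cqr HB D4).
rewrite (Bval _ _ _ _ _ _ _ _ B Hp Hq Hr Cpq Cpr Cqr HB D5).
rewrite (Bval _ _ _ _ _ _ _ _ B Hp Hq Hr Cpq Cpr Cqr HB D6).
rewrite (Bval _ _ _ _ _ _ _ _ B Hp Hq Hr Cpq Cpr Cqr HB D7).
pose proof (t_le2 _ _ _ _ _ _ _ _ Hp Hq Hr D0 ltac:(lia)).
pose proof (t_nonneg _ _ _ _ _ _ _ _ Hp Hq Hr D0 ltac:(lia)).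
pose proof (t_nonneg _ _ _ _ _ _ _ _ Hp Hq Hr D1 ltac:(lia)).
pose proof (t_nonneg _ _ _ _ _ _ _ _ Hp Hq Hr D2 ltac:(lia)).
pose proof (t_nonneg _ _ _ _ _ _ _ _ Hp Hq Hr D3 ltac:(lia)).
pose proof (t_nonneg _ _ _ _ _ _ _ _ Hp Hq Hr D4 ltac:(lia)).
pose proof (t_nonneg _ _ _ _ _ _ _ _ Hp Hq Hr D5 ltac:(lia)).
pose proof (t_nonneg _ _ _ _ _ _ _ _ Hp Hq Hr D6 ltac:(lia)).
pose proof (t_nonneg _ _ _ _ _ _ _ _ Hp Hq Hr D7 ltac:(lia)).
destruct D0 as [Ha0 [Hb0 [Hc0 _]]].
destruct D1 as [Ha1 [Hb1 [Hc1 _]]].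
destruct D2 as [Ha2 [Hb2 [Hc2 _]]].
destruct D3 as [Ha3 [Hb3 [Hc3 _]]].
destruct D4 as [Ha4 [Hb4 [Hc4 _]]].
destruct D5 as [Ha5 [Hb5 [Hc5 _]]].
destruct D6 as [Ha6 [Hb6 [Hc6 _]]].
destruct D7 as [Ha7 [Hb7 [Hc7 _]]].
destruct Dp as [Hxp [Hyp [Hzp _]]].
destruct Dq as [Hxq [Hyq [Hzq _]]].
destruct Dr as [Hxr [Hyr [Hzr _]]].
destruct S1 as (S1a & S1a' & S1b & S1b' & S1c & S1c').
destruct S2 as (S2a & S2a' & S2b & S2b' & S2c & S2c').
destruct S3 as (S3a & S3a' & S3b & S3b' & S3c & S3c').
destruct S4 as (S4a & S4a' & S4b & S4b' & S4c & S4c').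
destruct S5 as (S5a & S5a' & S5b & S5b' & S5c & S5c').
destruct S6 as (S6a & S6a' & S6b & S6b' & S6c & S6c').
destruct S7 as (S7a & S7a' & S7b & S7b' & S7c & S7c').
assert (G1 : wa1 = 0 /\ a1 = a) by (destruct (S1a' ltac:(lia)); lia).
assert (G2 : wb2 = 0 /\ b2 = b) by (destruct (S2b' ltac:(lia)); lia).
assert (G3 : wc3 = 0) by (destruct (S3c' ltac:(lia)); lia).
assert (G4 : wb4 = 0 /\ b4 = b1) by (destruct (S4b' ltac:(lia)); lia).
assert (G4' : wa4 = wa2 /\ a4 = a2).
{ destruct (Z_lt_le_dec a xq).
  - destruct (S2a ltac:(lia)); destruct (S4a ltac:(lia)); lia.
  - destruct (S2a' ltac:(lia)); destruct (S4a' ltac:(lia)); lia. }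
assert (G5 : wc5 = 0) by (destruct (S5c' ltac:(lia)); lia).
assert (G5' : wa5 = wa3).
{ destruct (Z_lt_le_dec a xr).
  - destruct (S3a ltac:(lia)); destruct (S5a ltac:(lia)); lia.
  - destruct (S3a' ltac:(lia)); destruct (S5a' ltac:(lia)); lia. }
assert (G6 : wc6 = 0) by (destruct (S6c' ltac:(lia)); lia).
assert (G6' : wb6 = wb3).
{ destruct (Z_lt_le_dec b yr).
  - destruct (S3b ltac:(lia)); destruct (S6b ltac:(lia)); lia.
  - destruct (S3b' ltac:(lia)); destruct (S6b' ltac:(lia)); lia. }
assert (G7 : wc7 = 0) by (destruct (S7c' ltac:(lia)); lia).
assert (G7' : wa7 = wa6).
{ destruct (Z_lt_le_dec a2 xr).
  - destruct (S6a ltac:(lia)); destruct (S7a ltac:(lia)); lia.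
  - destruct (S6a' ltac:(lia)); destruct (S7a' ltac:(lia)); lia. }
assert (G7'' : wb7 = wb5).
{ destruct (Z_lt_le_dec b1 yr).
  - destruct (S5b ltac:(lia)); destruct (S7b ltac:(lia)); lia.
  - destruct (S5b' ltac:(lia)); destruct (S7b' ltac:(lia)); lia. }
assert (W1 : 0 <= wb1 <= 1) by (destruct (Z_lt_le_dec b yp); [destruct (S1b ltac:(lia))|destruct (S1b' ltac:(lia))]; lia).
assert (W2 : 0 <= wc1 <= 1) by (destruct (Z_lt_le_dec c zp); [destruct (S1c ltac:(lia))|destruct (S1c' ltac:(lia))]; lia).
assert (W3 : 0 <= wa2 <= 1) by (destruct (Z_lt_le_dec a xq); [destruct (S2a ltac:(lia))|destruct (S2a' ltac:(lia))]; lia).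
assert (W4 : 0 <= wc2 <= 1) by (destruct (Z_lt_le_dec c zq); [destruct (S2c ltac:(lia))|destruct (S2c' ltac:(lia))]; lia).
assert (W5 : 0 <= wa3 <= 1) by (destruct (Z_lt_le_dec a xr); [destruct (S3a ltac:(lia))|destruct (S3a' ltac:(lia))]; lia).
assert (W6 : 0 <= wb3 <= 1) by (destruct (Z_lt_le_dec b yr); [destruct (S3b ltac:(lia))|destruct (S3b' ltac:(lia))]; lia).
assert (W7 : 0 <= wc4 <= 1) by (destruct (Z_lt_le_dec c1 zq); [destruct (S4c ltac:(lia))|destruct (S4c' ltac:(lia))]; lia).
assert (W8 : 0 <= wb5 <= 1) by (destruct (Z_lt_le_dec b1 yr); [destruct (S5b ltac:(lia))|destruct (S5b' ltac:(lia))]; lia).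
assert (W9 : 0 <= wa6 <= 1) by (destruct (Z_lt_le_dec a2 xr); [destruct (S6a ltac:(lia))|destruct (S6a' ltac:(lia))]; lia).
assert (K1 : wc1 = 0 -> wc2 <= wc4).
{ intro HK0. destruct (Z_lt_le_dec c zp); [destruct (S1c ltac:(lia)); lia|].
  destruct (S1c' ltac:(lia)) as [_ Ec1].
  destruct (Z_lt_le_dec c zq); [destruct (S2c ltac:(lia)) as [-> _]|destruct (S2c' ltac:(lia)) as [-> _]];
  (destruct (Z_lt_le_dec c1 zq); [destruct (S4c ltac:(lia)) as [-> _]|destruct (S4c' ltac:(lia)) as [-> _]]); lia. }
assert (K2 : wc1 = 1 -> wc4 <= wc2).
{ intro HK0. destruct (Z_lt_le_dec c zp); [|destruct (S1c' ltac:(lia)); lia].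
  destruct (S1c ltac:(lia)) as [_ Ec1].
  destruct (Z_lt_le_dec c zq); [destruct (S2c ltac:(lia)) as [-> _]|destruct (S2c' ltac:(lia)) as [-> _]];
  (destruct (Z_lt_le_dec c1 zq); [destruct (S4c ltac:(lia)) as [-> _]|destruct (S4c' ltac:(lia)) as [-> _]]); lia. }
clear S1a S1a' S1b S1b' S1c S1c' S2a S2a' S2b S2b' S2c S2c' S3a S3a' S3b S3b' S3c S3c'
  S4a S4a' S4b S4b' S4c S4c' S5a S5a' S5b S5b' S5c S5c' S6a S6a' S6b S6b' S6c S6c'
  S7a S7a' S7b S7b' S7c S7c' HB.
apply (abstract8 _ _ _ _ _ _ _ _ wb1 wc1 wa2 wc2 wa3 wb3 wc4 wb5 wa6); lia.
Qed.

End ZCore.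

Local Open Scope ring_scope.

Lemma divisors_mul_prime (m r : nat) : prime r -> (0 < m)%N -> ~~ (r %| m)%N ->
  perm_eq (divisors (m * r)) (divisors m ++ [seq (d * r)%N | d <- divisors m]).
Proof.
move=> pr m0 ndv; have r0 := prime_gt0 pr.
apply: uniq_perm; first exact: divisors_uniq.
  rewrite cat_uniq divisors_uniq map_inj_uniq ?divisors_uniq ?andbT /=; last first.
    by move=> x y /eqP; rewrite eqn_pmul2r // => /eqP.
  apply/hasPn => x /mapP [d _ ->]; rewrite -dvdn_divisors //.
  by apply/negP => /(dvdn_trans (dvdn_mull d (dvdnn r))); apply/negP.
move=> x; rewrite mem_cat -dvdn_divisors ?muln_gt0 ?m0 //.
apply/idP/idP.
  move=> xdv; case rx: (r %| x)%N.
    apply/orP; right; apply/mapP; case/dvdnP: rx => y Hy.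
    exists y; last exact: Hy.
    by rewrite -dvdn_divisors // -(dvdn_pmul2r r0) -Hy.
  apply/orP; left; rewrite -dvdn_divisors //.
  have cx : coprime x r by rewrite coprime_sym prime_coprime // rx.
  by rewrite -(Gauss_dvdl _ cx).
case/orP.
  by rewrite -dvdn_divisors // => /dvdn_mulr ->.
by case/mapP => d; rewrite -dvdn_divisors // => dv ->; rewrite dvdn_pmul2r.
Qed.

Definition Psi (k m : nat) : {poly int} := \prod_(d <- divisors m) 'Phi_(d * k).

Lemma Psi_split k m r : prime r -> (0 < m)%N -> ~~ (r %| m)%N ->
  Psi k (m * r) = Psi k m * Psi (r * k) m.
Proof.
move=> pr m0 ndv; rewrite /Psi (perm_big _ (@divisors_mul_prime m r pr m0 ndv)) big_cat big_map.
by congr (_ * _); apply: eq_bigr => d _; rewrite mulnA.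
Qed.

Lemma Psi1 k : Psi k 1 = 'Phi_k.
Proof. by rewrite /Psi (_ : divisors 1 = [:: 1%N]) // big_seq1 mul1n. Qed.

Lemma Psi_p k p : prime p -> Psi k p = 'Phi_k * 'Phi_(p * k).
Proof.
move=> pp; rewrite -[p]mul1n Psi_split ?Psi1 //; last by rewrite dvdn1 neq_ltn prime_gt1 ?orbT.
by rewrite mul1n.
Qed.

Lemma Psi_pq k p q : prime p -> prime q -> p != q ->
  Psi k (p * q) = ('Phi_k * 'Phi_(p * k)) * ('Phi_(q * k) * 'Phi_(p * (q * k))).
Proof.
move=> pp pq npq; rewrite Psi_split ?Psi_p ?prime_gt0 //.
by rewrite dvdn_prime2 // eq_sym.
Qed.

Lemma D_Psi n : (0 < n)%N -> 'X^n - 1 = Psi 1 n :> {poly int}.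
Proof.
move=> n0; rewrite -prod_Cyclotomic // /Psi; apply: eq_bigr => d _; by rewrite muln1.
Qed.

Lemma ac_prod (R : comRingType) (f : nat -> R) (s1 s2 : seq nat) :
  perm_eq s1 s2 -> \prod_(i <- s1) f i = \prod_(i <- s2) f i.
Proof. by move=> H; apply: perm_big. Qed.

Lemma acA (R : comRingType) (x1 xp xq xr xpq xpr xqr xpqr : R) :
  xpqr * x1 * ((x1 * xp) * (xq * xpq)) * ((x1 * xp) * (xr * xpr)) * ((x1 * xq) * (xr * xqr))
  = (((x1 * xp) * (xq * xpq)) * ((xr * xpr) * (xqr * xpqr))) * (x1 * xp) * (x1 * xq) * (x1 * xr).
Proof.
pose f i := nth 0 [:: x1; xp; xq; xr; xpq; xpr; xqr; xpqr] i.
transitivity (\prod_(i <- [:: 7; 0; 0; 1; 2; 4; 0; 1; 3; 5; 0; 2; 3; 6]%N) f i).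
  by rewrite !big_cons big_nil mulr1 /f /= !mulrA.
transitivity (\prod_(i <- [:: 0; 1; 2; 4; 3; 5; 6; 7; 0; 1; 0; 2; 0; 3]%N) f i).
  by apply: ac_prod.
by rewrite !big_cons big_nil mulr1 /f /= !mulrA.
Qed.

Lemma cyc_identity (p q r : nat) : prime p -> prime q -> prime r ->
  p != q -> q != r -> p != r ->
  'Phi_(p * q * r) * ('X^1 - 1) * ('X^(p * q) - 1) * ('X^(p * r) - 1) * ('X^(q * r) - 1)
  = ('X^(p * q * r) - 1) * ('X^p - 1) * ('X^q - 1) * ('X^r - 1) :> {poly int}.
Proof.
move=> pp pq pr npq nqr npr.
have p0 := prime_gt0 pp; have q0 := prime_gt0 pq; have r0 := prime_gt0 pr.
have ndv : ~~ (r %| p * q)%N.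
  by rewrite Euclid_dvdM // !dvdn_prime2 // negb_or eq_sym npr eq_sym nqr.
rewrite !D_Psi ?muln_gt0 ?p0 ?q0 ?r0 //.
rewrite (@Psi_split 1 (p * q) r) ?muln_gt0 ?p0 ?q0 //.
rewrite !Psi_pq // Psi1 !Psi_p // !muln1 !mulnA.
exact: acA.
Qed.

Definition Sg (k n : nat) : {poly int} := \sum_(i < n) ('X^k) ^+ i.

Lemma geo k n : 'X^(k * n) - 1 = ('X^k - 1) * Sg k n :> {poly int}.
Proof. by rewrite exprM subrX1. Qed.

Lemma acB (R : comRingType) (x y a b c s1 s2 s3 : R) :
  x * y * (a * s3) * (b * s2) * (c * s1) = (x * y * a * b * c) * (s1 * s2 * s3).
Proof.
pose f i := nth 0 [:: x; y; a; b; c; s1; s2; s3] i.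
transitivity (\prod_(i <- [:: 0; 1; 2; 7; 3; 6; 4; 5]%N) f i).
  by rewrite !big_cons big_nil mulr1 /f /= !mulrA.
transitivity (\prod_(i <- [:: 0; 1; 2; 3; 4; 5; 6; 7]%N) f i).
  by apply: ac_prod.
by rewrite !big_cons big_nil mulr1 /f /= !mulrA.
Qed.

Lemma acC (R : comRingType) (n a b c s1 s2 s3 : R) :
  (n * a * b * c) * (s1 * s2 * s3) = (s1 * s2 * s3) * a * b * c * n.
Proof.
pose f i := nth 0 [:: n; a; b; c; s1; s2; s3] i.
transitivity (\prod_(i <- [:: 0; 1; 2; 3; 4; 5; 6]%N) f i).
  by rewrite !big_cons big_nil mulr1 /f /= !mulrA.
transitivity (\prod_(i <- [:: 4; 5; 6; 1; 2; 3; 0]%N) f i).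
  by apply: ac_prod.
by rewrite !big_cons big_nil mulr1 /f /= !mulrA.
Qed.

Definition Gp (p q r : nat) : {poly int} := Sg (q * r) p * Sg (p * r) q * Sg (p * q) r.

Lemma key_identity (p q r : nat) : prime p -> prime q -> prime r ->
  p != q -> q != r -> p != r ->
  'Phi_(p * q * r) * ('X^1 - 1) * ('X^(p * q * r) - 1) * ('X^(p * q * r) - 1)
  = Gp p q r * ('X^p - 1) * ('X^q - 1) * ('X^r - 1) :> {poly int}.
Proof.
move=> pp pq pr npq nqr npr.
have N0 : (0 < p * q * r)%N by rewrite !muln_gt0 !prime_gt0.
have DN0 : ('X^(p * q * r) - 1 : {poly int}) != 0.
  by rewrite -polyC1 monic_neq0 // monicXnsubC.
apply: (mulIf DN0).
have E1 : 'X^(p * q * r) - 1 = ('X^(p * q) - 1) * Sg (p * q) r :> {poly int} by rewrite geo.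
have E2 : 'X^(p * q * r) - 1 = ('X^(p * r) - 1) * Sg (p * r) q :> {poly int} by rewrite -geo mulnAC.
have E3 : 'X^(p * q * r) - 1 = ('X^(q * r) - 1) * Sg (q * r) p :> {poly int}.
  by rewrite -geo [(q * r * p)%N]mulnC mulnA.
rewrite {1}E1 {1}E2 {1}E3 acB (@cyc_identity p q r pp pq pr npq nqr npr) /Gp acC.
by [].
Qed.

Definition cz (P : {poly int}) (m : int) : int := if (m < 0)%R then 0 else P`_(`|m|%N).

Lemma cz_pos P (k : nat) : cz P k%:Z = P`_k.
Proof. by rewrite /cz ltz_nat ltn0. Qed.

Lemma cz_neg P m : m < 0 -> cz P m = 0.
Proof. by rewrite /cz => ->. Qed.

Lemma cz_sub P (k s : nat) : cz P (k%:Z - s%:Z) = if (s <= k)%N then P`_(k - s) else 0.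
Proof.
case: leqP => sk; first by rewrite subzn // cz_pos.
by rewrite cz_neg // subr_lt0 ltz_nat.
Qed.

Lemma cz_mulD P (k : nat) m : cz (P * ('X^k - 1)) m = cz P (m - k%:Z) - cz P m.
Proof.
case: m => j.
  rewrite cz_sub cz_pos mulrBr mulr1 coefB coefMXn.
  by case: leqP => kj; rewrite ?subrr // sub0r.
have Hn : Negz j < 0 by [].
rewrite !cz_neg ?subr0 //.
by rewrite ltrBlDr add0r (lt_le_trans Hn).
Qed.

Definition fidx (p q r : nat) (x : 'I_p * 'I_q * 'I_r) : nat :=
  (nat_of_ord (fst (fst x)) * (q * r) + nat_of_ord (snd (fst x)) * (p * r) + nat_of_ord (snd x) * (p * q))%N.

Lemma G_sum p q r : Gp p q r = \sum_(x : 'I_p * 'I_q * 'I_r) 'X^(fidx p q r x).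
Proof.
rewrite /Gp /Sg big_distrl /=.
under eq_bigr => i _ do rewrite big_distrr /=.
rewrite pair_bigA /= big_distrl /=.
under eq_bigr => ij _ do rewrite big_distrr /=.
rewrite pair_bigA /=.
apply: eq_bigr => [[[i j] k]] _ /=.
rewrite -!exprM -!exprD /fidx /=.
by rewrite [(q * r * i)%N]mulnC [(p * r * j)%N]mulnC [(p * q * k)%N]mulnC.
Qed.

Module Bridge.
Local Open Scope Z_scope.
Lemma natZ_add (a b : nat) : Z.of_nat (a + b)%N = (Z.of_nat a + Z.of_nat b).
Proof. by rewrite -plusE Nat2Z.inj_add. Qed.

Lemma natZ_mul (a b : nat) : Z.of_nat (a * b)%N = (Z.of_nat a * Z.of_nat b).
Proof. by rewrite -multE Nat2Z.inj_mul. Qed.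

Lemma natZ_lt {a b : nat} : (a < b)%N -> (Z.of_nat a < Z.of_nat b).
Proof. move/ssrnat.ltP; lia. Qed.

Lemma relZ {m n : nat} : prime m -> prime n -> m != n ->
  rel_prime (Z.of_nat m) (Z.of_nat n).
Proof.
move=> pm pn mn.
have cop : coprime m n by rewrite prime_coprime // dvdn_prime2.
have [a _ ] := @Bezoutl m n (prime_gt0 pm).
rewrite (eqP cop) => /dvdnP [k Hk].
apply: bezout_rel_prime; apply: (Bezout_intro _ _ _ (Z.of_nat k) (- Z.of_nat a)).
have := f_equal Z.of_nat Hk; rewrite natZ_add !natZ_mul; lia.
Qed.

Lemma fZ {p q r} (x : 'I_p * 'I_q * 'I_r) :
  Z.of_nat (fidx p q r x) = (Z.of_nat (fst (fst x)) * Z.of_nat q * Z.of_nat r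
    + Z.of_nat (snd (fst x)) * Z.of_nat p * Z.of_nat r + Z.of_nat (snd x) * Z.of_nat p * Z.of_nat q).
Proof. rewrite /fidx !natZ_add !natZ_mul; ring. Qed.

Definition Bz (p q r : nat) (z : Z) : bool :=
  if (z <? 0) then false else [exists x : 'I_p * 'I_q * 'I_r, fidx p q r x == Z.to_nat z].

Lemma Bz_E p q r z : Bz p q r z = true <-> ZCore.E (Z.of_nat p) (Z.of_nat q) (Z.of_nat r) z.
Proof.
rewrite /Bz; case: (Z.ltb_spec z 0) => hz.
  split=> // [[a [b [c [Ha [Hb [Hc Hz]]]]]]]; exfalso; nia.
split.
  move/existsP => [x /eqP Hx].
  exists (Z.of_nat (fst (fst x))), (Z.of_nat (snd (fst x))), (Z.of_nat (snd x)).
  have := natZ_lt (ltn_ord (fst (fst x))); have := natZ_lt (ltn_ord (snd (fst x))).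
  have := natZ_lt (ltn_ord (snd x)); have := fZ x; rewrite Hx Z2Nat.id // => HE h3 h2 h1.
  split; [split; [apply Nat2Z.is_nonneg|exact h1]|].
  split; [split; [apply Nat2Z.is_nonneg|exact h2]|].
  split; [split; [apply Nat2Z.is_nonneg|exact h3]|exact HE].
move=> [a [b [c [Ha [Hb [Hc Hz]]]]]].
have ha : (Z.to_nat a < p)%N by apply/ssrnat.ltP; lia.
have hb : (Z.to_nat b < q)%N by apply/ssrnat.ltP; lia.
have hc : (Z.to_nat c < r)%N by apply/ssrnat.ltP; lia.
apply/existsP; exists (Ordinal ha, Ordinal hb, Ordinal hc); apply/eqP.
apply: Nat2Z.inj; rewrite fZ /= !Z2Nat.id //; lia.
Qed.

End Bridge.
Import Bridge.

Module Bridge2.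
Local Open Scope Z_scope.

Lemma prime2Z {p} : prime p -> 2 <= Z.of_nat p.
Proof. move/prime_gt1/natZ_lt => H; lia. Qed.

Lemma digits_of {p q r} (x : 'I_p * 'I_q * 'I_r) :
  ZCore.digits (Z.of_nat p) (Z.of_nat q) (Z.of_nat r) (Z.of_nat (fidx p q r x))
    (Z.of_nat (fst (fst x))) (Z.of_nat (snd (fst x))) (Z.of_nat (snd x)) 0.
Proof.
rewrite /ZCore.digits.
split; [split; [apply Nat2Z.is_nonneg|exact: natZ_lt (ltn_ord _)]|].
split; [split; [apply Nat2Z.is_nonneg|exact: natZ_lt (ltn_ord _)]|].
split; [split; [apply Nat2Z.is_nonneg|exact: natZ_lt (ltn_ord _)]|].
rewrite fZ; ring.
Qed.

Lemma fidx_inj p q r : prime p -> prime q -> prime r -> p != q -> q != r -> p != r ->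
  injective (fidx p q r).
Proof.
move=> pp pq pr npq nqr npr x y Hxy.
have Dx := digits_of x; have Dy := digits_of y.
rewrite Hxy in Dx.
have [e1 [e2 [e3 _]]] := ZCore.digits_unique _ _ _ _ _ _ _ _ _ _ _ _ (prime2Z pp) (prime2Z pq) (prime2Z pr)
  (relZ pp pq npq) (relZ pp pr npr) (relZ pq pr nqr) Dx Dy.
move: x y e1 e2 e3 {Hxy Dx Dy} => [[a b] c] [[a' b'] c'] /= /Nat2Z.inj/ord_inj -> /Nat2Z.inj/ord_inj ->
  /Nat2Z.inj/ord_inj ->.
by [].
Qed.
End Bridge2.
Import Bridge2.

Lemma Gcoef p q r : prime p -> prime q -> prime r -> p != q -> q != r -> p != r ->
  forall j, (Gp p q r)`_j = (Bz p q r (Z.of_nat j))%:R.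
Proof.
move=> pp pq pr npq nqr npr j.
rewrite G_sum coef_sum /Bz.
have -> : Z.ltb (Z.of_nat j) 0 = false by apply/Z.ltb_ge; lia.
rewrite Nat2Z.id.
under eq_bigr do rewrite coefXn.
case: existsP => [[x0 /eqP fx0] | nex].
  rewrite (bigD1 x0) //= -fx0 eqxx big1 ?addr0 // => y ny.
  case: eqP => // /esym /(@fidx_inj p q r pp pq pr npq nqr npr) yx.
  by rewrite yx eqxx in ny.
rewrite big1 // => y _; case: eqP => // Hj; case: nex; exists y; by rewrite Hj.
Qed.

Lemma czG p q r : prime p -> prime q -> prime r -> p != q -> q != r -> p != r ->
  forall k s : nat, cz (Gp p q r) (k%:Z - s%:Z) = (Bz p q r (Z.sub (Z.of_nat k) (Z.of_nat s)))%:R.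
Proof.
move=> pp pq pr npq nqr npr k s.
rewrite cz_sub; case: leqP => sk.
  rewrite (@Gcoef p q r pp pq pr npq nqr npr) -minusE Nat2Z.inj_sub //; exact/ssrnat.leP.
rewrite /Bz; have -> : Z.ltb (Z.sub (Z.of_nat k) (Z.of_nat s)) 0 = true.
  by apply/Z.ltb_lt; have := natZ_lt sk; lia.
by [].
Qed.

Lemma cz_subN P (N : nat) m : m < N%:Z -> cz (P * ('X^N - 1)) m = - cz P m.
Proof. by move=> mN; rewrite cz_mulD cz_neg ?sub0r // subr_lt0. Qed.

Lemma subzz (x : int) (a b : nat) : x - a%:Z - b%:Z = x - (a + b)%N%:Z.
Proof. by rewrite PoszD opprD addrA. Qed.

Module Bridge3.
Local Open Scope Z_scope.
Lemma zs3 k a b c : Z.of_nat k - Z.of_nat (a + (b + c))%N = Z.of_nat k - Z.of_nat c - Z.of_nat b - Z.of_nat a.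
Proof. rewrite !natZ_add; lia. Qed.
Lemma zs2 k a b : Z.of_nat k - Z.of_nat (a + b)%N = Z.of_nat k - Z.of_nat b - Z.of_nat a.
Proof. rewrite !natZ_add; lia. Qed.
End Bridge3.
Import Bridge3.

Lemma final8 (bn bp bq br bpq bpr bqr bpqr : bool) :
  Z.le (Z.abs (Z.sub (Z.add (Z.add (Z.add (Z.sub (Z.sub (Z.sub (ZCore.ind bn) (ZCore.ind bp)) (ZCore.ind bq)) (ZCore.ind br))
     (ZCore.ind bpq)) (ZCore.ind bpr)) (ZCore.ind bqr)) (ZCore.ind bpqr))) 1 ->
  `|- ((bpqr%:R - bqr%:R - (bpr%:R - br%:R)) - (bpq%:R - bq%:R - (bp%:R - bn%:R)))| <= 1 :> int.
Proof.
case: bn; case: bp; case: bq; case: br; case: bpq; case: bpr; case: bqr; case: bpqr;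
rewrite /ZCore.ind /= => H; try lia; by [].
Qed.

Lemma main_lt (p q r : nat) : prime p -> prime q -> prime r ->
  p != q -> q != r -> p != r -> forall k : nat, (k < p * q * r)%N ->
  `|cz 'Phi_(p * q * r) k%:Z - cz 'Phi_(p * q * r) (k%:Z - 1)| <= 1.
Proof.
move=> pp pq pr npq nqr npr k kN.
have -> : cz 'Phi_(p * q * r) k%:Z - cz 'Phi_(p * q * r) (k%:Z - 1)
   = - cz ('Phi_(p * q * r) * ('X^1 - 1)) k%:Z by rewrite cz_mulD opprB.
have kN' : k%:Z < (p * q * r)%N%:Z by rewrite ltz_nat.
rewrite -[cz ('Phi_(p * q * r) * _) _]opprK -(@cz_subN _ _ _ kN') -(@cz_subN _ _ _ kN').
rewrite (@key_identity p q r pp pq pr npq nqr npr) !cz_mulD !subzz !(@czG p q r pp pq pr npq nqr npr).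
rewrite cz_pos (@Gcoef p q r pp pq pr npq nqr npr) zs3 !zs2.
apply: final8.
have Hk : Z.le 0 (Z.of_nat k) /\ Z.lt (Z.of_nat k) (Z.mul (Z.mul (Z.of_nat p) (Z.of_nat q)) (Z.of_nat r)).
  by rewrite -!natZ_mul; split; [apply Nat2Z.is_nonneg | apply: natZ_lt].
exact: (ZCore.core _ _ _ _ (Bz p q r) (prime2Z pp) (prime2Z pq) (prime2Z pr)
  (relZ pp pq npq) (relZ pp pr npr) (relZ pq pr nqr) (Bz_E p q r) Hk).
Qed.

Lemma size_Phi_le (p q r : nat) : prime p -> prime q -> prime r ->
  p != q -> q != r -> p != r -> (size 'Phi_(p * q * r) <= (p * q * r).-1)%N.
Proof.
move=> pp pq pr npq nqr npr.
have cpq : coprime p q by rewrite prime_coprime // dvdn_prime2.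
have cpqr : coprime (p * q) r.
  by rewrite coprimeMl !prime_coprime // !dvdn_prime2 // npr nqr.
rewrite size_Cyclotomic totient_coprime // totient_coprime // !totient_prime //.
have := prime_gt1 pp; have := prime_gt1 pq; have := prime_gt1 pr.
move=> /ssrnat.ltP h1 /ssrnat.ltP h2 /ssrnat.ltP h3.
apply/ssrnat.leP; rewrite -!multE. nia.
Qed.

Theorem theorem3 (p q r : nat) :
  prime p -> prime q -> prime r ->
  p != q -> q != r -> p != r ->
  (p < q)%N -> (p < r)%N ->
  forall n : int, `|a_pqr p q r n - a_pqr p q r (n - 1)| <= 1.
Proof.
move=> pp pq pr npq nqr npr _ _ n.
have Ea : forall m, a_pqr p q r m = cz 'Phi_(p * q * r) m by [].
rewrite !Ea.
case: n => k; last first.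
  have h : Negz k < 0 by [].
  rewrite !cz_neg ?subr0 ?normr0 //.
case: (ltnP k (p * q * r)) => hk; first exact: main_lt.
have hs := @size_Phi_le p q r pp pq pr npq nqr npr.
have k1 : (1 <= k)%N.
  by apply: leq_trans hk; rewrite !muln_gt0 !prime_gt0.
rewrite -[1]/(1%N%:Z) subzn // !cz_pos !nth_default ?subrr ?normr0 //.
  by apply: leq_trans hs _; rewrite -subn1 leq_sub2r.
by apply: leq_trans hs _; apply: leq_trans (leq_pred _) hk.
Qed.
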